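(* Let $p$ be an odd prime and $G = \langle a,b : (a[a^p,b])^p,\ b^p\rangle$. Then $G$ is a weakly para-$(C_p*C_p)$ group of Type II: writing $F=F(a,b)$, $G = F/N$ and $C_p*C_p = F/K$ with $K$ the normal closure of $\{a^p,b^p\}$, one has $N \lneq K$. In particular $G$ is not residually nilpotent.
   Context: Commutator convention: $[x,y]=x^{-1}y^{-1}xy$. $C_p$ is the cyclic group of order $p$; $C_p*C_p=\langle a,b : a^p, b^p\rangle$. Lower central series: $\gamma_1(G)=G$, $\gamma_k(G)=[G,\gamma_{k-1}(G)]$. A group $G$ is weakly para-$\Gamma$ if $G/\gamma_k(G)\cong\Gamma/\gamma_k(\Gamma)$ for all $k\ge1$. For $G=F/N$ weakly para-$\Gamma$ with $F$ free of rank $\mathrm{rk}(\Gamma)$ and $\Gamma=F/K$: $G$ is of Type I if some automorphism $\phi$ of $F$ has $\phi(N)\ge K$; of Type II if some automorphism $\phi$ of $F$ has $\phi(N)\lneq K$; of Type III otherwise. *)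

(* Defs.v *)
From Stdlib Require Import ClassicalEpsilon FunctionalExtensionality
  PropExtensionality ProofIrrelevance.

Set Implicit Arguments.

Record group := Group {
  gcar :> Type;
  gmul : gcar -> gcar -> gcar;
  ginv : gcar -> gcar;
  gone : gcar;
  gmulA : forall x y z, gmul x (gmul y z) = gmul (gmul x y) z;
  gmul1l : forall x, gmul gone x = x;
  gmul1r : forall x, gmul x gone = x;
  gmulVl : forall x, gmul (ginv x) x = gone;
  gmulVr : forall x, gmul x (ginv x) = gone }.

Arguments gmul {g}. Arguments ginv {g}. Arguments gone {g}.
Arguments gmulA {g}. Arguments gmul1l {g}. Arguments gmul1r {g}.
Arguments gmulVl {g}. Arguments gmulVr {g}.

Section Basics.
Variable G : group.
Implicit Types x y z g : G.

Fixpoint gpow x (n : nat) : G :=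
  match n with O => gone | S m => gmul (gpow x m) x end.

Definition comm x y : G := gmul (gmul (gmul (ginv x) (ginv y)) x) y.

Definition conj x g : G := gmul (gmul (ginv g) x) g.

Definition gsubset := G -> Prop.

Definition is_subgroup (H : gsubset) : Prop :=
  H gone /\ (forall x y, H x -> H y -> H (gmul x y)) /\ (forall x, H x -> H (ginv x)).

Definition is_normal (H : gsubset) : Prop :=
  is_subgroup H /\ (forall x g, H x -> H (conj x g)).

Definition gen (S : gsubset) : gsubset :=
  fun x => forall H, is_subgroup H -> (forall y, S y -> H y) -> H x.

Definition ncl (S : gsubset) : gsubset :=
  fun x => forall H, is_normal H -> (forall y, S y -> H y) -> H x.

Definition commsg (A B : gsubset) : gsubset :=
  gen (fun z => exists x y, A x /\ B y /\ z = comm x y).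

Definition fullset : gsubset := fun _ => True.

(* lcs n = gamma_{n+1} *)
Fixpoint lcs (n : nat) : gsubset :=
  match n with O => fullset | S m => commsg fullset (lcs m) end.

(* lower central series: gamma 1 = G, gamma (k+1) = [G, gamma k];
   (gamma 0 is also set to G, it is never used) *)
Definition gamma (k : nat) : gsubset :=
  match k with O => fullset | S m => lcs m end.

Lemma inv_unique x y : gmul x y = gone -> ginv x = y.
Proof.
  intro H. rewrite <- (gmul1r (ginv x)), <- H, gmulA, gmulVl, gmul1l. reflexivity.
Qed.

Lemma conjM x y g : conj (gmul x y) g = gmul (conj x g) (conj y g).
Proof.
  unfold conj. rewrite !gmulA. f_equal.
  rewrite <- (gmulA _ g (ginv g)), gmulVr, gmul1r. reflexivity.
Qed.

Lemma conj1 g : conj gone g = gone.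
Proof. unfold conj. rewrite gmul1r, gmulVl. reflexivity. Qed.

Lemma conjV x g : conj (ginv x) g = ginv (conj x g).
Proof.
  symmetry. apply inv_unique. rewrite <- conjM, gmulVr. apply conj1.
Qed.

Lemma conj_comm x y g : conj (comm x y) g = comm (conj x g) (conj y g).
Proof. unfold comm. rewrite !conjM, !conjV. reflexivity. Qed.

Lemma gen_subgroup S : is_subgroup (gen S).
Proof.
  split; [|split].
  - intros H [h1 _] _. exact h1.
  - intros x y hx hy H hH hS. pose proof hH as [_ [hm _]]. apply hm; [apply hx|apply hy]; auto.
  - intros x hx H hH hS. pose proof hH as [_ [_ hi]]. apply hi; apply hx; auto.
Qed.

Lemma gen_normal S : (forall x g, S x -> S (conj x g)) -> is_normal (gen S).
Proof.
  intro hS. split; [apply gen_subgroup|].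
  intros x g hx H hH hSH.
  apply (hx (fun z => H (conj z g))).
  - destruct hH as [h1 [hm hi]]. split; [|split].
    + rewrite conj1. exact h1.
    + intros u v hu hv. rewrite conjM. auto.
    + intros u hu. rewrite conjV. auto.
  - intros y hy. apply hSH, hS, hy.
Qed.

Lemma full_normal : is_normal fullset.
Proof. repeat split. Qed.

Lemma commsg_normal B : is_normal B -> is_normal (commsg fullset B).
Proof.
  intros hB. apply gen_normal. intros z g [x [y [_ [hy ->]]]].
  exists (conj x g), (conj y g). split; [exact I|split].
  - apply hB, hy.
  - apply conj_comm.
Qed.

Lemma lcs_normal n : is_normal (lcs n).
Proof. induction n; simpl; [apply full_normal | apply commsg_normal; auto]. Qed.

Lemma gamma_normal k : is_normal (gamma k).
Proof. destruct k; [apply full_normal | apply lcs_normal]. Qed.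

Lemma ncl_normal S : is_normal (ncl S).
Proof.
  split; [split; [|split]|].
  - intros H hH _. apply hH.
  - intros x y hx hy H hH hS. apply hH; [apply hx|apply hy]; auto.
  - intros x hx H hH hS. apply hH; apply hx; auto.
  - intros x g hx H hH hS. apply hH; apply hx; auto.
Qed.

End Basics.

Arguments fullset {G}. Arguments conj {G}. Arguments comm {G}. Arguments gpow {G}.

Section Quotient.
Variable G : group.
Variable A : gsubset G.
Hypothesis hA : is_normal A.

Definition coset (x : G) : gsubset G := fun y => A (gmul (ginv x) y).

Definition qcar := { P : gsubset G | exists x, P = coset x }.

Definition rep (P : qcar) : G :=
  proj1_sig (constructive_indefinite_description _ (proj2_sig P)).

Lemma rep_spec P : proj1_sig P = coset (rep P).
Proof. unfold rep. destruct (constructive_indefinite_description _ _). exact e. Qed.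

Definition mk (x : G) : qcar := exist _ (coset x) (ex_intro _ x eq_refl).

Lemma qeq (P Q : qcar) : proj1_sig P = proj1_sig Q -> P = Q.
Proof.
  destruct P as [P hP], Q as [Q hQ]; simpl; intros ->.
  f_equal; apply proof_irrelevance.
Qed.

Lemma mk_rep P : mk (rep P) = P.
Proof. apply qeq. simpl. symmetry. apply rep_spec. Qed.

Lemma A_sym (x y : G) : A (gmul (ginv x) y) -> A (gmul (ginv y) x).
Proof.
  intro h. destruct hA as [[_ [_ hi]] _].
  replace (gmul (ginv y) x) with (ginv (gmul (ginv x) y)); [auto|].
  apply inv_unique. rewrite !gmulA.
  rewrite <- (gmulA (ginv x) y), gmulVr, gmul1r, gmulVl. reflexivity.
Qed.

Lemma A_trans (x y z : G) :
  A (gmul (ginv x) y) -> A (gmul (ginv y) z) -> A (gmul (ginv x) z).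
Proof.
  intros h1 h2. destruct hA as [[_ [hm _]] _].
  replace (gmul (ginv x) z) with (gmul (gmul (ginv x) y) (gmul (ginv y) z)); auto.
  rewrite gmulA, <- (gmulA (ginv x) y), gmulVr, gmul1r. reflexivity.
Qed.

Lemma A_refl (x : G) : A (gmul (ginv x) x).
Proof. rewrite gmulVl. apply hA. Qed.

Lemma mk_eq (x y : G) : A (gmul (ginv x) y) -> mk x = mk y.
Proof.
  intro h. apply qeq. simpl. apply functional_extensionality. intro z.
  apply propositional_extensionality. unfold coset. split; intro h'.
  - eapply A_trans; [apply A_sym, h | exact h'].
  - eapply A_trans; [exact h | exact h'].
Qed.

Lemma rep_mk (x : G) : A (gmul (ginv (rep (mk x))) x).
Proof.
  pose proof (rep_spec (mk x)) as E. simpl in E.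
  assert (H : coset x x) by apply A_refl.
  rewrite E in H. exact H.
Qed.

Definition qmul (P Q : qcar) : qcar := mk (gmul (rep P) (rep Q)).
Definition qinv (P : qcar) : qcar := mk (ginv (rep P)).
Definition qone : qcar := mk gone.

Lemma qmul_mk (x y : G) : qmul (mk x) (mk y) = mk (gmul x y).
Proof.
  unfold qmul. apply mk_eq.
  set (rx := rep (mk x)). set (ry := rep (mk y)).
  assert (hu : A (gmul (ginv rx) x)) by apply rep_mk.
  assert (hv : A (gmul (ginv ry) y)) by apply rep_mk.
  destruct hA as [[_ [hm _]] hn].
  replace (gmul (ginv (gmul rx ry)) (gmul x y))
    with (gmul (conj (gmul (ginv rx) x) ry) (gmul (ginv ry) y)); auto.
  assert (Hi : ginv (gmul rx ry) = gmul (ginv ry) (ginv rx)).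
  { apply inv_unique. rewrite !gmulA, <- (gmulA rx ry), gmulVr, gmul1r, gmulVr.
    reflexivity. }
  rewrite Hi. unfold conj. rewrite !gmulA.
  rewrite <- (gmulA _ ry (ginv ry)), gmulVr, gmul1r. reflexivity.
Qed.

Lemma qmulA (P Q R : qcar) : qmul P (qmul Q R) = qmul (qmul P Q) R.
Proof.
  rewrite <- (mk_rep P), <- (mk_rep Q), <- (mk_rep R).
  rewrite !qmul_mk, gmulA. reflexivity.
Qed.

Lemma qmul1l (P : qcar) : qmul qone P = P.
Proof. rewrite <- (mk_rep P). unfold qone. rewrite qmul_mk, gmul1l. reflexivity. Qed.

Lemma qmul1r (P : qcar) : qmul P qone = P.
Proof. rewrite <- (mk_rep P). unfold qone. rewrite qmul_mk, gmul1r. reflexivity. Qed.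

Lemma qmulVl (P : qcar) : qmul (qinv P) P = qone.
Proof.
  unfold qinv. replace (qmul (mk (ginv (rep P))) P)
    with (qmul (mk (ginv (rep P))) (mk (rep P))) by (rewrite mk_rep; reflexivity).
  rewrite qmul_mk, gmulVl. reflexivity.
Qed.

Lemma qmulVr (P : qcar) : qmul P (qinv P) = qone.
Proof.
  unfold qinv. replace (qmul P (mk (ginv (rep P))))
    with (qmul (mk (rep P)) (mk (ginv (rep P)))) by (rewrite mk_rep; reflexivity).
  rewrite qmul_mk, gmulVr. reflexivity.
Qed.

Definition quotient : group :=
  @Group qcar qmul qinv qone qmulA qmul1l qmul1r qmulVl qmulVr.

End Quotient.

Definition hom {G H : group} (f : G -> H) : Prop :=
  forall x y, f (gmul x y) = gmul (f x) (f y).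

Definition bijective {X Y : Type} (f : X -> Y) : Prop :=
  (forall x y, f x = f y -> x = y) /\ (forall y, exists x, f x = y).

Definition isomorphic (G H : group) : Prop :=
  exists f : G -> H, hom f /\ bijective f.

Definition automorphism {G : group} (f : G -> G) : Prop := hom f /\ bijective f.

Definition free2 (F : group) (a b : F) : Prop :=
  forall (H : group) (h1 h2 : H),
    exists f : F -> H, hom f /\ f a = h1 /\ f b = h2 /\
      (forall f' : F -> H, hom f' -> f' a = h1 -> f' b = h2 -> forall x, f' x = f x).

Definition lcs_quotient (G : group) (k : nat) : group :=
  quotient (gamma_normal G k).

Definition weakly_para (G Gam : group) : Prop :=
  forall k, 1 <= k -> isomorphic (lcs_quotient G k) (lcs_quotient Gam k).

Definition residually_nilpotent (G : group) : Prop :=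
  forall g : G, (forall k, 1 <= k -> gamma G k g) -> g = gone.

Definition typeII (F : group) (N K : gsubset F) : Prop :=
  exists phi : F -> F, automorphism phi /\
    (forall x, N x -> K (phi x)) /\
    (exists y, K y /\ ~ (exists x, N x /\ phi x = y)).

Definition proper_subset (F : group) (N K : gsubset F) : Prop :=
  (forall x, N x -> K x) /\ (exists y, K y /\ ~ N y).

(* Main.v *)
Require Import Defs.
From mathcomp Require Import ssreflect ssrbool ssrnat prime.
Module Model.
From mathcomp Require Import all_boot all_fingroup all_algebra.
Import GRing.Theory.
Definition of_fg (gT : finGroupType) : Defs.group :=
  @Defs.Group gT mulg invg 1%g (@mulgA gT) (@mul1g gT) (@mulg1 gT) (@mulVg gT) (@mulgV gT).

Lemma gpow_fg (gT : finGroupType) (x : gT) k : @gpow (of_fg gT) x k = (x ^+ k)%g.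
Proof. elim: k => [|k IH] //=. by rewrite IH expgSr. Qed.

Section M.
Variable p : nat.
Hypothesis hp : prime p.
Hypothesis hodd : odd p.
Definition nn := p ^ p - p.-1 ^ p.

Lemma p_gt2 : 2 < p.
Proof.
  have h2 := prime_gt1 hp. rewrite ltn_neqAle h2 andbT. apply/eqP => e. move: hodd. by rewrite -e.
Qed.

Lemma nn_eq : nn + p.-1 ^ p = p ^ p.
Proof. rewrite /nn subnK // leq_exp2r //; [exact: leq_pred | exact: prime_gt0]. Qed.

Lemma nn_gt : p < nn.
Proof.
  have h3 := p_gt2.
  have l0 := nn_eq.
  move: h3 l0. rewrite /nn. case: p => [|q] //= h3 l0.
  have e : q.+1 ^ q.+1 = q.+1 ^ q * q + q.+1 ^ q by rewrite -mulnSr -expnSr.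
  have q0 : 0 < q by rewrite -ltnS (ltn_trans _ h3).
  have l1 : q ^ q.+1 <= q.+1 ^ q * q by rewrite expnSr leq_mul2r leq_exp2r // leqnSn orbT.
  have l2 : q.+1 < q.+1 ^ q.
    apply: (@leq_trans (q.+1 ^ 2)).
      by rewrite expnS expn1 -{1}(mul1n q.+1) ltn_mul2r (ltn_trans _ h3).
    by rewrite leq_exp2l // (ltn_trans _ h3).
  apply: (leq_trans l2). rewrite -(leq_add2r (q ^ q.+1)) l0 e addnC leq_add2r. done.
Qed.


Lemma cop : coprime p nn.
Proof.
  rewrite prime_coprime //. apply/negP => d.
  have : p %| p.-1 ^ p.
    by rewrite -(dvdn_addr _ d) nn_eq dvdn_exp // prime_gt0.
  rewrite Euclid_dvdX // => /andP [d2 _].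
  have := dvdn_leq _ d2. have h3 := p_gt2.
  case: p h3 d2 {d} => [|q] //= h3 d2. case: q h3 d2 => [|q] //= h3 d2.
  move=> /(_ isT). by rewrite ltnn.
Qed.

Lemma nn1 : 1 < nn.
Proof. have := nn_gt. have := p_gt2. move=> h1 h2. exact: (ltn_trans (ltn_trans _ h1) h2). Qed.

Local Open Scope ring_scope.
Definition up : 'Z_nn := p%:R.
Lemma up_unit : up \is a GRing.unit.
Proof. by rewrite /up unitZpE ?nn1 // coprime_sym cop. Qed.
Definition rr : 'Z_nn := (p.-1)%:R / up.
Lemma pm1 : (p.-1)%:R = up - 1 :> 'Z_nn.
Proof. by rewrite /up -(prednK (prime_gt0 hp)) -natr1 addrK. Qed.
Lemma rr_up : rr * up = (p.-1)%:R.
Proof. by rewrite /rr divrK // up_unit. Qed.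
Lemma rr_p : rr ^+ p = 1.
Proof.
  apply: (@mulrI _ (up ^+ p)); first by rewrite unitrX // up_unit.
  rewrite mulr1 mulrC -exprMn rr_up -natrX /up -natrX -nn_eq natrD pchar_Zp ?nn1 //.
  by rewrite add0r.
Qed.

Lemma fA_inj : injective (fun x : 'Z_nn => x + 1).
Proof. by apply: (can_inj (g := fun x => x - 1)) => x; rewrite addrK. Qed.
Lemma fB_inj : injective (fun x : 'Z_nn => rr * x).
Proof.
  apply: (can_inj (g := fun x => rr ^+ p.-1 * x)) => x.
  by rewrite mulrA -exprSr prednK ?prime_gt0 // rr_p mul1r.
Qed.
Definition A0 : {perm 'Z_nn} := perm fA_inj.
Definition B0 : {perm 'Z_nn} := perm fB_inj.

Lemma powA k x : (A0 ^+ k)%g x = x + k%:R.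
Proof.
  elim: k x => [|k IH] x; first by rewrite expg0 perm1 addr0.
  by rewrite expgSr permM IH permE /= -natr1 addrA.
Qed.
Lemma powB k x : (B0 ^+ k)%g x = rr ^+ k * x.
Proof.
  elim: k x => [|k IH] x; first by rewrite expg0 perm1 expr0 mul1r.
  by rewrite expgSr permM IH permE /= mulrA -exprS.
Qed.
Lemma invT x : ((A0 ^+ p)^-1)%g x = x - up.
Proof. apply: (@perm_inj _ (A0 ^+ p)%g). by rewrite permKV powA subrK. Qed.
Lemma invB x : (B0^-1)%g x = rr ^+ p.-1 * x.
Proof.
  apply: (@perm_inj _ B0). rewrite permKV permE /= mulrA -exprS prednK ?prime_gt0 //.
  by rewrite rr_p mul1r.
Qed.

Lemma W1 : (A0 * ((((A0 ^+ p)^-1 * B0^-1) * A0 ^+ p) * B0) = 1)%g.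
Proof.
  apply/permP => x. rewrite perm1 !permM invT invB powA permE /= permE /=.
  rewrite mulrDr mulrA -exprS prednK ?prime_gt0 // rr_p mul1r rr_up pm1.
  by rewrite -!addrA addKr addrA addrK.
Qed.
End M.

Lemma model p : prime p -> odd p -> exists (M : Defs.group) (A B : M),
  gpow (gmul A (comm (gpow A p) B)) p = gone /\ gpow B p = gone /\ gpow A p <> gone.
Proof.
  move=> hp hodd. exists (@of_fg {perm 'Z_(nn p)}).
  exists (@A0 p), (@B0 p hp hodd). rewrite !gpow_fg. split; [|split].
  - rewrite /comm /=. have := W1 p hp hodd. move=> -> /=. by rewrite expg1n.
  - apply/permP => x. by rewrite powB (@rr_p p hp hodd) mul1r /= perm1.
  - move=> /= /permP /(_ 0%R). rewrite powA perm1 add0r. move=> e.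
    have := up_unit p hp hodd. by rewrite /up e unitr0.
Qed.
End Model.

Section GL.
Variable G : group.
Implicit Types x y z : G.

Lemma mulKV x y : gmul x (gmul (ginv x) y) = y.
Proof. by rewrite gmulA gmulVr gmul1l. Qed.
Lemma mulVK x y : gmul (ginv x) (gmul x y) = y.
Proof. by rewrite gmulA gmulVl gmul1l. Qed.
Lemma invinv x : ginv (ginv x) = x.
Proof. apply: inv_unique. exact: gmulVl. Qed.
Lemma inv1 : ginv (@gone G) = gone.
Proof. apply: inv_unique. exact: gmul1l. Qed.
Lemma invM x y : ginv (gmul x y) = gmul (ginv y) (ginv x).
Proof. apply: inv_unique. by rewrite gmulA -(gmulA x) gmulVr gmul1r gmulVr. Qed.
Lemma comm_inv x y : ginv (comm x y) = comm y x.
Proof.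
  rewrite /comm !invM !invinv. by rewrite !gmulA.
Qed.
Lemma idem1 x : gmul x x = x -> x = gone.
Proof. move=> h. by rewrite -(mulVK x x) h gmulVl. Qed.

Lemma sub1 {H : gsubset G} : is_subgroup H -> H gone.
Proof. by case. Qed.
Lemma subM {H : gsubset G} {x y} : is_subgroup H -> H x -> H y -> H (gmul x y).
Proof. by case=> _ [h _]; apply: h. Qed.
Lemma subV {H : gsubset G} {x} : is_subgroup H -> H x -> H (ginv x).
Proof. by case=> _ [_ h]; apply: h. Qed.
Lemma subVE {H : gsubset G} {x} : is_subgroup H -> H (ginv x) -> H x.
Proof. move=> hH h. rewrite -(invinv x). exact: subV. Qed.

Lemma cong_pow (H : gsubset G) x y n : is_normal H -> H (gmul (ginv x) y) ->
  H (gmul (ginv (gpow x n)) (gpow y n)).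
Proof.
  move=> hH h. elim: n => [|n IH] /=.
  - rewrite inv1 gmul1l. exact: (sub1 (proj1 hH)).
  - have e : gmul (ginv (gmul (gpow x n) x)) (gmul (gpow y n) y) =
      gmul (conj (gmul (ginv (gpow x n)) (gpow y n)) x) (gmul (ginv x) y).
      rewrite /conj invM !gmulA. congr (gmul _ y).
      by rewrite -(gmulA _ x (ginv x)) gmulVr gmul1r.
    rewrite e. apply: (subM (proj1 hH)) => //. by apply hH.
Qed.

Lemma gen_incl (S : gsubset G) y : S y -> gen S y.
Proof. move=> h H _ hS. exact: hS. Qed.
Lemma ncl_incl (S : gsubset G) y : S y -> ncl S y.
Proof. move=> h H _ hS. exact: hS. Qed.

Lemma lcs_key (A0 B0 : G) p :
  gpow (gmul A0 (comm (gpow A0 p) B0)) p = gone -> forall m, lcs G m (gpow A0 p).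
Proof.
  move=> hw. elim=> [|m IH] //.
  have hH := lcs_normal G m.+1.
  have hc : lcs G m.+1 (comm (gpow A0 p) B0).
    rewrite -comm_inv. apply: (subV (proj1 hH)). apply: gen_incl.
    by exists B0, (gpow A0 p).
  have := cong_pow (lcs G m.+1) A0 (gmul A0 (comm (gpow A0 p) B0)) p hH.
  rewrite mulVK => /(_ hc). rewrite hw gmul1r => h. exact: (subVE (proj1 hH)).
Qed.
End GL.
Arguments sub1 {G H}. Arguments subM {G H x y}. Arguments subV {G H x}. Arguments subVE {G H x}.
Arguments gen_incl {G S y}.
Arguments mulKV {G}. Arguments mulVK {G}. Arguments invinv {G}. Arguments inv1 {G}. Arguments invM {G}. Arguments comm_inv {G}. Arguments idem1 {G}. Arguments cong_pow {G}. Arguments lcs_key {G A0 B0 p}. Arguments ncl_incl {G S y}.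

Section Hom.
Variables G H : group.
Variable f : G -> H.
Hypothesis hf : hom f.

Lemma hom1 : f gone = gone.
Proof. apply: idem1. by rewrite -hf gmul1l. Qed.
Lemma homV x : f (ginv x) = ginv (f x).
Proof. symmetry. apply: inv_unique. by rewrite -hf gmulVr hom1. Qed.
Lemma homX x n : f (gpow x n) = gpow (f x) n.
Proof. elim: n => [|n IH] /=; [exact: hom1 | by rewrite hf IH]. Qed.
Lemma homC x y : f (comm x y) = comm (f x) (f y).
Proof. by rewrite /comm !hf !homV. Qed.
Lemma homJ x y : f (conj x y) = conj (f x) (f y).
Proof. by rewrite /conj !hf !homV. Qed.

Lemma pre_sub (S : gsubset H) : is_subgroup S -> is_subgroup (fun x => S (f x)).
Proof.
  move=> hS. split; [|split].
  - rewrite hom1. exact: sub1.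
  - move=> x y hx hy. rewrite hf. exact: subM.
  - move=> x hx. rewrite homV. exact: subV.
Qed.
Lemma pre_normal (S : gsubset H) : is_normal S -> is_normal (fun x => S (f x)).
Proof.
  move=> hS. split; first exact: pre_sub (proj1 hS).
  move=> x g hx. rewrite homJ. by apply hS.
Qed.
Lemma img_sub (S : gsubset G) : is_subgroup S -> is_subgroup (fun y => exists x, S x /\ f x = y).
Proof.
  move=> hS. split; [|split].
  - exists gone. split; [exact: sub1 | exact: hom1].
  - move=> _ _ [x [hx <-]] [y [hy <-]]. exists (gmul x y). split; [exact: subM | exact: hf].
  - move=> _ [x [hx <-]]. exists (ginv x). split; [exact: subV | exact: homV].
Qed.

Lemma lcs_img m x : lcs G m x -> lcs H m (f x).
Proof.
  elim: m x => [|m IH] x //= hx.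
  apply: (hx (fun x => commsg fullset (lcs H m) (f x))).
  - apply: pre_sub. exact: gen_subgroup.
  - move=> _ [u [v [_ [hv ->]]]]. rewrite homC. apply: gen_incl.
    exists (f u), (f v). by split; [|split; [apply: IH|]].
Qed.

Hypothesis fsurj : forall y, exists x, f x = y.

Lemma lcs_srj m y : lcs H m y -> exists x, lcs G m x /\ f x = y.
Proof.
  elim: m y => [|m IH] y /=.
  - move=> _. case: (fsurj y) => x hx. by exists x.
  - move=> hy. apply: (hy (fun y => exists x, commsg fullset (lcs G m) x /\ f x = y)).
    + apply: img_sub. exact: gen_subgroup.
    + move=> _ [u [v [_ [hv ->]]]]. case: (IH v hv) => v' [hv' <-].
      case: (fsurj u) => u' <-. exists (comm u' v'). split; last exact: homC.
      apply: gen_incl. by exists u', v'.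
Qed.
End Hom.
Arguments hom1 {G H f}. Arguments homV {G H f} hf x. Arguments homX {G H f} hf x n. Arguments homC {G H f} hf x y. Arguments homJ {G H f} hf x y.
Arguments pre_normal {G H f} hf {S}.

Section Quot.
Variable G : group.
Variable A : gsubset G.
Hypothesis hA : is_normal A.

Lemma mk_hom : @hom G (quotient hA) (mk A).
Proof. move=> x y /=. by rewrite qmul_mk. Qed.
Lemma mk_surj (P : qcar A) : exists x, P = mk A x.
Proof. exists (rep P). by rewrite mk_rep. Qed.
Lemma mk_eqP x y : mk A x = mk A y -> A (gmul (ginv x) y).
Proof.
  move=> e. have h : coset A y y by rewrite /coset gmulVl; exact: sub1 (proj1 hA).
  have e' : proj1_sig (mk A x) = proj1_sig (mk A y) by rewrite e.
  simpl in e'. rewrite -e' in h. exact: h.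
Qed.
Lemma mk1P x : mk A x = qone A -> A x.
Proof. move=> e. have := @mk_eqP x gone e. rewrite gmul1r => h. exact: (subVE (proj1 hA) h). Qed.
Lemma mk1 x : A x -> mk A x = qone A.
Proof. move=> h. apply: mk_eq => //. rewrite gmul1r. exact: subV (proj1 hA) h. Qed.
End Quot.
Arguments mk_surj {G A} P. Arguments mk_eqP {G A} hA {x y}. Arguments mk1P {G A} hA {x}. Arguments mk1 {G A} hA {x}. Arguments mk_hom {G A} hA.

Lemma gamma_img (G H : group) (f : G -> H) (hf : hom f) k x : gamma G k x -> gamma H k (f x).
Proof. case: k => [|k] //=. exact: lcs_img. Qed.
Lemma gamma_srj (G H : group) (f : G -> H) (hf : hom f) (fs : forall y, exists x, f x = y) k y :
  gamma H k y -> exists x, gamma G k x /\ f x = y.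
Proof.
  case: k => [|k] /=; last exact: lcs_srj.
  move=> _. case: (fs y) => x hx. by exists x.
Qed.

Lemma iso_gen (G H : group) (f : G -> H) (hf : hom f) (fs : forall y, exists x, f x = y)
  (ker : forall x, f x = gone -> forall k, gamma G k x) k :
  isomorphic (lcs_quotient G k) (lcs_quotient H k).
Proof.
  rewrite /lcs_quotient.
  set hA := gamma_normal G k. set hB := gamma_normal H k.
  pose Phi := fun P : qcar (gamma G k) => mk (gamma H k) (f (rep P)).
  have PhiE : forall x, Phi (mk _ x) = mk (gamma H k) (f x).
    move=> x. rewrite /Phi. apply: (mk_eq hB). rewrite -homV // -hf.
    apply: gamma_img => //. exact: rep_mk.
  exists Phi. split; [|split].
  - move=> P Q. case: (mk_surj P) => x ->. case: (mk_surj Q) => y ->.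
    simpl. rewrite (qmul_mk hA x y) !PhiE hf. by rewrite (qmul_mk hB).
  - move=> P Q. case: (mk_surj P) => x ->. case: (mk_surj Q) => y ->.
    rewrite PhiE PhiE => /(mk_eqP hB). rewrite -homV // -hf => hb.
    case: (gamma_srj _ _ _ hf fs _ _ hb) => z [hz ez].
    apply: (mk_eq hA).
    have e1 : gmul z (gmul (ginv z) (gmul (ginv x) y)) = gmul (ginv x) y by rewrite mulKV.
    rewrite -e1. apply: (subM (proj1 hA)) => //. apply: ker.
    by rewrite hf homV // ez gmulVl.
  - move=> Q. case: (mk_surj Q) => y ->. case: (fs y) => x <-. exists (mk _ x). exact: PhiE.
Qed.

Lemma triv_normal (G : group) : is_normal (fun y : G => y = gone).
Proof.
  split; [split; [|split]|].
  - done.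
  - move=> x y -> ->. exact: gmul1l.
  - move=> x ->. exact: inv1.
  - move=> x g ->. exact: conj1.
Qed.
Lemma gammaI_normal (G : group) : is_normal (fun y : G => forall k, gamma G k y).
Proof.
  split; [split; [|split]|].
  - move=> k. exact: sub1 (proj1 (gamma_normal G k)).
  - move=> x y hx hy k. exact: subM (proj1 (gamma_normal G k)) (hx k) (hy k).
  - move=> x hx k. exact: subV (proj1 (gamma_normal G k)) (hx k).
  - move=> x g hx k. exact: (proj2 (gamma_normal G k)) _ _ (hx k).
Qed.

Section Main.
Variable p : nat.
Hypothesis hp : prime p.
Hypothesis hodd : odd p.
Variable F : group.
Variables a b : F.
Hypothesis hF : free2 F a b.
Hypothesis model : exists (M : Defs.group) (A B : M),
  gpow (gmul A (comm (gpow A p) B)) p = gone /\ gpow B p = gone /\ gpow A p <> gone.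

Definition w := gmul a (comm (gpow a p) b).
Definition SN : gsubset F := fun x => x = gpow w p \/ x = gpow b p.
Definition SK : gsubset F := fun x => x = gpow a p \/ x = gpow b p.
Let hN := ncl_normal SN.
Let hK := ncl_normal SK.

Lemma NK x : ncl SN x -> ncl SK x.
Proof.
  move=> hx. apply: hx; first exact: ncl_normal.
  move=> y [->|->]; last by apply: ncl_incl; right.
  have ht : ncl SK (gpow a p) by apply: ncl_incl; left.
  have hc : ncl SK (comm (gpow a p) b).
    have -> : comm (gpow a p) b = gmul (ginv (gpow a p)) (conj (gpow a p) b)
      by rewrite /comm /conj !gmulA.
    apply: (subM (proj1 hK)); [exact: subV (proj1 hK) ht | exact: (proj2 hK)].
  have := cong_pow (ncl SK) a w p hK. rewrite /w mulVK => /(_ hc) h.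
  rewrite -(mulKV (gpow a p) (gpow _ p)). exact: subM (proj1 hK) ht h.
Qed.

Lemma notN : ~ ncl SN (gpow a p).
Proof.
  case: model => M [A [B [h1 [h2 h3]]]].
  case: (hF M A B) => f [hf [fa [fb _]]].
  move=> hx. apply: h3. rewrite -fa -(homX hf).
  apply: (hx (fun x => f x = gone) (pre_normal hf (triv_normal M))).
  move=> y [->|->]; rewrite (homX hf) //.
  - by rewrite /w hf (homC hf) (homX hf) fa fb.
  - by rewrite fb.
Qed.

Let hm := mk_hom hN.

Lemma mkT_gamma k : gamma (quotient hN) k (mk (ncl SN) (gpow a p)).
Proof.
  have e : mk (ncl SN) (gpow w p) = qone (ncl SN) by apply: (mk1 hN); apply: ncl_incl; left.
  rewrite /w (homX hm) hm (homC hm) (homX hm) in e.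
  case: k => [|m] //=. rewrite (homX hm). exact: (@lcs_key (quotient hN) _ _ p e m).
Qed.

Lemma kerK x : ncl SK x -> forall k, gamma (quotient hN) k (mk (ncl SN) x).
Proof.
  move=> hx. apply: (hx (fun x => forall k, gamma (quotient hN) k (mk (ncl SN) x)) (pre_normal hm (gammaI_normal _))).
  - move=> y [->|->]; first exact: mkT_gamma.
    rewrite (mk1 hN); last by apply: ncl_incl; right.
    move=> k. exact: sub1 (proj1 (gamma_normal _ k)).
Qed.

Definition pi (P : quotient hN) : quotient hK := mk (ncl SK) (rep P).
Lemma piE x : pi (mk _ x) = mk _ x.
Proof. apply: (mk_eq hK). apply: NK. exact: rep_mk. Qed.
Lemma pi_hom : hom pi.
Proof.
  move=> P Q. case: (mk_surj P) => x ->. case: (mk_surj Q) => y ->.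
  simpl. by rewrite (qmul_mk hN x y) !piE (qmul_mk hK).
Qed.
Lemma pi_surj : forall y, exists x, pi x = y.
Proof. move=> Q. case: (mk_surj Q) => y ->. exists (mk _ y). exact: piE. Qed.
Lemma pi_ker : forall x, pi x = gone -> forall k, gamma (quotient hN) k x.
Proof.
  move=> P. case: (mk_surj P) => x ->. rewrite piE => /(mk1P hK) hx. exact: kerK.
Qed.

Lemma main_conj :
  weakly_para (quotient hN) (quotient hK) /\ typeII (ncl SN) (ncl SK) /\
  proper_subset (ncl SN) (ncl SK) /\ ~ residually_nilpotent (quotient hN).
Proof.
  split; [|split; [|split]].
  - move=> k _. exact: (iso_gen _ _ _ pi_hom pi_surj pi_ker k).
  - exists id. split; [split; [by []|split; [by []|by move=> y; exists y]]|].
    split; first exact: NK.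
    exists (gpow a p). split; first by apply: ncl_incl; left.
    move=> [x [hx e]]. apply: notN. by rewrite -e.
  - split; first exact: NK.
    exists (gpow a p). split; first by apply: ncl_incl; left. exact: notN.
  - move=> RN. apply: notN. apply: (mk1P hN). apply: RN => k _. exact: mkT_gamma.
Qed.
End Main.

Theorem mainTheorem9 (p : nat) (hp : prime p) (hodd : odd p)
  (F : group) (a b : F) (hF : free2 F a b) :
  let N := ncl (fun x : F => x = gpow (gmul a (comm (gpow a p) b)) p \/ x = gpow b p) in
  let K := ncl (fun x : F => x = gpow a p \/ x = gpow b p) in
  let G := quotient (ncl_normal (fun x : F => x = gpow (gmul a (comm (gpow a p) b)) p \/ x = gpow b p)) in
  let Gam := quotient (ncl_normal (fun x : F => x = gpow a p \/ x = gpow b p)) in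
  weakly_para G Gam /\ typeII N K /\ proper_subset N K /\ ~ residually_nilpotent G.
Proof.
  move=> N K G Gam.
  exact: (main_conj p F a b hF (Model.model p hp hodd)).
Qed.
Print Assumptions mainTheorem9.
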